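(* Let $k=k(n)$ be an integer with $2\le k\le o\!\left(\frac{n}{\log n}\right)$. Then, as $n\to\infty$, $$\mathbb{E}\big[(X-\mathbb{E}X)^k\big]=\Theta\!\left(\sum_{\substack{V\le\mathbb{F}_2^k\\ V\text{ robust}}}|T_V|\cdot N^{-\lambda\dim V}\right),$$ the sum ranging over all robust linear subspaces $V$ of $\mathbb{F}_2^k$.
   Context: All logarithms are base 2 and $h$ is the binary entropy function. Fix rational $\gamma\in(0,\frac12)$ and rational $\lambda\in(0,h(\gamma))$. The integer $n$ ranges over values for which $\lambda n$ is an integer and $\gamma n$ is an even integer; asymptotics are as $n\to\infty$. Let $N=2^n$. Let $K$ be a uniformly random $\lambda n\times n$ matrix over $\mathbb{F}_2$, $C=\{x\in\mathbb{F}_2^n:Kx=0\}$, $L=\{x\in\mathbb{F}_2^n:\|x\|=\gamma n\}$ ($\|\cdot\|$ = Hamming weight), and $X=|C\cap L|$. For a subspace $U\le\mathbb{F}_2^k$ and $I\subseteq[k]$, $U_I$ denotes the projection $\{u_I:u\in U\}$ of $U$ onto the coordinates in $I$. Coordinate $i\in[k]$ is sensitive for $U$ if $\dim U_{[k]\setminus\{i\}}=\dim U-1$; $U$ is robust if it has no sensitive coordinate. For $U\le\mathbb{F}_2^k$, $T_U$ is the set of $k\times n$ binary matrices each of whose rows has weight exactly $\gamma n$ and each of whose columns lies in $U$. *)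

(* Defs.v *)
From HB Require Import structures.
From mathcomp Require Import all_boot all_order all_algebra.
From Stdlib Require Import Reals.

Set Implicit Arguments.
Unset Strict Implicit.
Unset Printing Implicit Defensive.

Local Open Scope ring_scope.

Definition hwt (n : nat) (u : 'rV['F_2]_n) : nat := #|[set j : 'I_n | u 0 j != 0]|.

Definition Xcount (m n w : nat) (K : 'M['F_2]_(m, n)) : nat :=
  #|[set x : 'cV['F_2]_n | (K *m x == 0) && (hwt x^T == w)]|.

(* Subspaces U of F_2^k are represented by their canonical generating
   square matrix A : 'M_k (the row space of A is U), i.e. those A with
   <<A>>%MS = A.  This gives a bijection with the subspaces of 'rV_k. *)
Definition is_subspace_rep (k : nat) (A : 'M['F_2]_k) : bool := (<<A>>%MS == A).

(* dim U = \rank A ; projection of U deleting coordinate i has dimension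
   \rank (col' i A).  Coordinate i is sensitive iff
   dim U_{[k]\{i}} = dim U - 1. *)
Definition sensitive (k : nat) (A : 'M['F_2]_k) (i : 'I_k) : bool :=
  ((\rank (col' i A)).+1 == \rank A)%N.

Definition robust (k : nat) (A : 'M['F_2]_k) : bool :=
  [forall i : 'I_k, ~~ sensitive A i].

Definition T_set (k n w : nat) (A : 'M['F_2]_k) : {set 'M['F_2]_(k, n)} :=
  [set M : 'M['F_2]_(k, n) |
     [forall i : 'I_k, hwt (row i M) == w] &&
     [forall j : 'I_n, ((col j M)^T <= A)%MS]].

Local Close Scope ring_scope.

Local Open Scope R_scope.

Definition log2 (x : R) : R := ln x / ln 2.

Definition hbin (x : R) : R := - x * log2 x - (1 - x) * log2 (1 - x).

Definition Rsum (T : finType) (f : T -> R) : R := \big[Rplus/0]_(t : T) f t.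

(* K uniform over the 2^(m n) matrices of size m x n (m = lambda n) *)
Definition EX (m n w : nat) : R :=
  Rsum (fun K : 'M['F_2]_(m, n) => INR (Xcount w K)) / 2 ^ (m * n).

Definition central_moment (k m n w : nat) : R :=
  Rsum (fun K : 'M['F_2]_(m, n) => (INR (Xcount w K) - EX m n w) ^ k) / 2 ^ (m * n).

(* sum over robust subspaces V of F_2^k of |T_V| N^{-lambda dim V},
   with N^{-lambda dim V} = 2^{-(lambda n) dim V} = 1 / 2^(m dim V) *)
Definition robust_sum (k m n w : nat) : R :=
  Rsum (fun A : 'M['F_2]_k =>
          if is_subspace_rep A && robust A
          then INR #|T_set n w A| / 2 ^ (m * \rank A)
          else 0).

Definition admissible (gamma lambda : R) (n m w : nat) : Prop :=
  lambda * INR n = INR m /\ gamma * INR n = INR w /\ ~~ odd w.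

Definition is_rational (x : R) : Prop :=
  exists (a : Z) (b : nat), (0 < b)%nat /\ x = IZR a / INR b.

(* Main.v *)
Require Import Defs.
From HB Require Import structures.
From mathcomp Require Import all_boot all_order all_algebra.
From Stdlib Require Import Reals.
From Stdlib Require Import Lia Lra Psatz.
From mathcomp Require Import zify.
Local Open Scope R_scope.

Lemma stdlib_side (gamma lambda : R) (k : nat -> nat) :
  0 < gamma -> 0 < lambda ->
  (forall eps, 0 < eps -> exists n0 : nat, forall n m w,
      admissible gamma lambda n m w -> (n0 <= n)%nat ->
      INR (k n) <= eps * (INR n / log2 (INR n))) ->
  exists n0 : nat, forall n m w, admissible gamma lambda n m w -> (n0 <= n)%nat ->
     (1 <= w)%nat /\ (S (k n) <= m)%nat.
Proof.
intros hg hl ho.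
destruct (ho (lambda / 2)) as [n0 Hn0]; [lra|].
destruct (INR_unbounded (2 / lambda + 2)) as [n1 Hn1].
exists (Nat.max n0 (Nat.max n1 2)); intros n m w Had Hn.
pose proof (Hn0 n m w Had ltac:(lia)) as Hk.
destruct Had as [Hm [Hw _]].
assert (Hn1' : INR n1 <= INR n) by (apply le_INR; lia).
assert (Hn2 : 2 <= INR n) by (replace 2 with (INR 2) by (simpl; lra); apply le_INR; lia).
assert (Hl2 : 0 < ln 2) by (pose proof ln_lt_2; lra).
assert (Hln : ln 2 <= ln (INR n)).
{ destruct (Rle_lt_or_eq_dec _ _ Hn2) as [H|H].
  - left; apply ln_increasing; lra.
  - rewrite <- H; lra. }
assert (HL : 1 <= log2 (INR n)).
{ unfold log2. apply (Rmult_le_reg_r (ln 2)); [lra|].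
  replace (ln (INR n) / ln 2 * ln 2) with (ln (INR n)) by (field; lra). lra. }
set (L := log2 (INR n)) in *.
set (X := INR n / L) in *.
assert (HX : X * L = INR n) by (unfold X; field; lra).
assert (HX0 : 0 <= X) by (unfold X; apply Rmult_le_pos; [lra| left; apply Rinv_0_lt_compat; lra]).
assert (HXn : X <= INR n) by nra.
assert (Hm2 : 2 < INR m).
{ rewrite <- Hm. assert (lambda * (2 / lambda) = 2) by (field; lra).
  assert (2 / lambda < INR n) by lra.
  assert (lambda * (2 / lambda) < lambda * INR n) by (apply Rmult_lt_compat_l; lra). lra. }
split.
- destruct w as [|w']; [|lia]. simpl in Hw. assert (0 < gamma * INR n) by (apply Rmult_lt_0_compat; lra). lra.
- assert (INR (S (k n)) < INR m).
  { rewrite S_INR. assert (INR (k n) <= lambda / 2 * INR n) by nra. lra. }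
  apply INR_lt in H. lia.
Qed.


From mathcomp Require Import zify ring lra.
From mathcomp Require Import Rstruct.
Set Implicit Arguments.
Unset Strict Implicit.
Unset Printing Implicit Defensive.
Import Order.TTheory GRing.Theory Num.Theory.
Local Open Scope ring_scope.

Section Lin.
Variable F : fieldType.

Lemma ker_col'1 k (i : 'I_k) :
  (kermx (col' i (1%:M : 'M[F]_k)) :=: (delta_mx 0 i : 'rV[F]_k))%MS.
Proof.
apply/eqmxP; apply/andP; split.
  apply/row_subP => r; set v := row r _.
  have hv : v *m col' i 1%:M = 0 by rewrite /v -row_mul mulmx_ker row0.
  clearbody v.
  have -> : v = v 0 i *: delta_mx 0 i.
    apply/matrixP => a b; rewrite !mxE (ord1 a) eqxx /=.
    case: (unliftP i b) => [j ->|->]; last by rewrite eqxx mulr1.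
    move: hv; rewrite col'Esub mulmx_colsub mulmx1 => /matrixP /(_ 0 j).
    rewrite !mxE => ->.
    by rewrite lift_eqF mulr0.
  by rewrite scalemx_sub.
rewrite sub_kermx col'Esub mulmx_colsub mulmx1; apply/eqP/matrixP => a b.
by rewrite !mxE lift_eqF andbF.
Qed.

Lemma rank_cap_delta r k (A : 'M[F]_(r, k)) (i : 'I_k) :
  \rank (A :&: (delta_mx 0 i : 'rV[F]_k))%MS = ((delta_mx 0 i : 'rV[F]_k) <= A)%MS.
Proof.
set d := (delta_mx 0 i : 'rV[F]_k).
case: (boolP (d <= A)%MS) => h.
  by rewrite ((capmx_idPr h).1) mxrank_delta.
have le1 : leq (\rank (A :&: d)%MS) (\rank d) by apply: mxrankS; apply: capmxSr.
have := mxrank_leqif_sup (capmxSr A d).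
move=> /leqifP; case: ifP => [hs|_ lt].
  by move/negP: h; case; apply: submx_trans hs (capmxSl _ _).
by move: lt; rewrite /d mxrank_delta ltnS leqn0 => /eqP ->.
Qed.

End Lin.

Section Diag.
Variable F : fieldType.
Variable k : nat.
Implicit Types (S D : {set 'I_k}).

Definition Dg S : 'M[F]_k := diag_mx (\row_i ((i \in S)%:R)).
Local Notation dl i := (delta_mx 0 i : 'rV[F]_k).

Lemma row_Dg S j : row j (Dg S) = if j \in S then dl j else 0.
Proof.
apply/rowP => b; rewrite !mxE; case: (j \in S); rewrite ?mxE //=.
by rewrite eq_sym mulr1n.
by rewrite mul0rn.
Qed.

Lemma delta_sub_Dg S i : (dl i <= Dg S)%MS = (i \in S).
Proof.
case: (boolP (i \in S)) => h.
  by rewrite -[dl i](_ : row i (Dg S) = _) ?row_sub // row_Dg h.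
apply/negP => /submxP [X] /matrixP /(_ 0 i).
rewrite /Dg mul_mx_diag !mxE (negbTE h) mulr0 !eqxx /=.
by move/eqP; rewrite oner_eq0.
Qed.

Lemma Dg_subP S m (X : 'M[F]_(m, k)) :
  reflect (forall j, j \in S -> (dl j <= X)%MS) (Dg S <= X)%MS.
Proof.
apply: (iffP idP) => [h j jS|h].
  by apply: submx_trans h; rewrite delta_sub_Dg.
apply/row_subP => j; rewrite row_Dg; case: ifP => jS; first exact: h.
exact: sub0mx.
Qed.

Lemma Dg_addC S : Dg S + Dg (~: S) = 1%:M.
Proof.
apply/matrixP => a b; rewrite !mxE in_setC.
by case: (a \in S); case: (a == b); rewrite /= ?addr0 ?add0r.
Qed.

Lemma ker_Dg S : (kermx (Dg S) :=: Dg (~: S))%MS.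
Proof.
apply/eqmxP; apply/andP; split.
  have -> : kermx (Dg S) = kermx (Dg S) *m Dg (~: S).
    by rewrite -[LHS]mulmx1 -(Dg_addC S) mulmxDr mulmx_ker add0r.
  exact: submxMl.
rewrite sub_kermx; apply/eqP/matrixP => a b.
rewrite /Dg mul_diag_mx !mxE in_setC.
by case: (a \in S); case: (a == b); rewrite /= ?mulr0 ?mul0r.
Qed.

Lemma rank_Dg_le S : leq (\rank (Dg S)) #|S|.
Proof.
pose R : 'M[F]_(#|S|, k) := \matrix_(j < #|S|) dl (enum_val j).
apply: leq_trans (rank_leq_row R).
apply: mxrankS; apply/Dg_subP => j jS.
have -> : dl j = row (enum_rank_in jS j) R by rewrite rowK enum_rankK_in.
exact: row_sub.
Qed.

Lemma Dg_setU1 S i : (Dg (i |: S) :=: dl i + Dg S)%MS.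
Proof.
apply/eqmxP; apply/andP; split.
  apply/Dg_subP => j; rewrite in_setU1 => /orP [/eqP ->|jS].
    exact: addsmxSl.
  apply: submx_trans (addsmxSr _ _); by rewrite delta_sub_Dg.
rewrite addsmx_sub delta_sub_Dg setU11 /=.
by apply/Dg_subP => j jS; rewrite delta_sub_Dg in_setU1 jS orbT.
Qed.

Definition cc s (U : 'M[F]_(s, k)) D := \rank (U :&: Dg D)%MS.

Lemma cc_step s (U : 'M[F]_(s, k)) D i :
  (dl i <= U)%MS -> i \notin D -> cc U (i |: D) = (cc U D).+1.
Proof.
move=> hU hD; rewrite /cc.
have e1 : (U :&: Dg (i |: D) :=: dl i + (Dg D :&: U))%MS.
  apply: eqmx_trans (cap_eqmx (eqmx_refl U) (Dg_setU1 D i)) _.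
  rewrite capmxC; apply: eqmx_sym; exact: matrix_modl.
rewrite e1.1.
have := mxrank_sum_cap (dl i) (Dg D :&: U)%MS.
rewrite [(dl i :&: _)%MS]capmxC rank_cap_delta mxrank_delta.
rewrite [(Dg D :&: U)%MS]capmxC.
have -> : (dl i <= U :&: Dg D)%MS = false.
  apply/negP => h; move: (submx_trans h (capmxSr _ _)).
  by rewrite delta_sub_Dg (negbTE hD).
by rewrite addn0 add1n.
Qed.

Lemma cc_robust s (U : 'M[F]_(s, k)) D :
  (forall i, ~~ (dl i <= U)%MS) -> D != set0 -> leq (cc U D).+1 #|D|.
Proof.
move=> hU /set0Pn [i iD]; rewrite /cc.
apply: leq_trans (rank_Dg_le D).
have := mxrank_leqif_sup (capmxSr U (Dg D)).
move=> /leqifP; case: ifP => // hs _.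
have : (Dg D <= U)%MS by apply: submx_trans hs (capmxSl _ _).
move/Dg_subP/(_ i iD); by rewrite (negbTE (hU i)).
Qed.

Lemma cc_le s (U : 'M[F]_(s, k)) D : leq (cc U D) (\rank U).
Proof. by apply: mxrankS; apply: capmxSl. Qed.

Lemma cc0 s (U : 'M[F]_(s, k)) : cc U set0 = 0%N.
Proof.
apply/eqP; rewrite -leqn0.
have h1 := rank_Dg_le (set0 : {set 'I_k}); rewrite cards0 in h1.
apply: leq_trans h1; by apply: mxrankS; apply: capmxSr.
Qed.

Lemma rank_split n (M : 'M[F]_(k, n)) S :
  (\rank (Dg S *m M) + cc M^T (~: S))%N = \rank M.
Proof.
rewrite -mxrank_tr trmx_mul tr_diag_mx -(mxrank_tr M) /cc.
rewrite -(mxrank_mul_ker M^T (Dg S)).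
congr (_ + _)%N.
apply: esym; have := cap_eqmx (eqmx_refl M^T) (ker_Dg S); by case.
Qed.
End Diag.

Lemma sensitiveE k (A : 'M['F_2]_k) (i : 'I_k) :
  sensitive A i = ((delta_mx 0 i : 'rV['F_2]_k) <= A)%MS.
Proof.
rewrite /sensitive.
have e : col' i A = A *m col' i 1%:M by rewrite col'Esub mulmx_colsub mulmx1.
have h := mxrank_mul_ker A (col' i (1%:M : 'M['F_2]_k)).
rewrite -e in h.
have h2 : \rank (A :&: kermx (col' i (1%:M : 'M['F_2]_k)))%MS =
          \rank (A :&: (delta_mx 0 i : 'rV['F_2]_k))%MS.
  have := cap_eqmx (eqmx_refl A) (@ker_col'1 [the fieldType of 'F_2] k i).
  by case.
rewrite h2 rank_cap_delta in h.
case: ((delta_mx 0 i : 'rV['F_2]_k) <= A)%MS h => /= h; apply/eqP; lia.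
Qed.

Lemma card_sub_F2 m n (Z : 'M['F_2]_n) :
  #|[set K : 'M['F_2]_(m, n) | (K <= Z)%MS]| = expn 2 (muln m (\rank Z)).
Proof.
have -> : [set K : 'M['F_2]_(m, n) | (K <= Z)%MS] =
          [set C *m row_base Z | C in [set: 'M['F_2]_(m, \rank Z)]].
  apply/setP => K; rewrite inE; apply/idP/imsetP.
    rewrite -(eq_row_base Z) => /submxP [D ->]; by exists D; rewrite ?inE.
  by case=> C _ ->; rewrite -(eq_row_base Z) submxMl.
rewrite card_imset; last exact: row_free_inj (row_base_free Z).
by rewrite cardsT card_mx card_Fp.
Qed.

Lemma card_ker_F2 m n s (Y : 'M['F_2]_(n, s)) :
  #|[set K : 'M['F_2]_(m, n) | K *m Y == 0]| = expn 2 (muln m (subn n (\rank Y))).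
Proof.
rewrite -mxrank_ker -card_sub_F2; apply: eq_card => K.
by rewrite !inE sub_kermx.
Qed.

Lemma card_super_F2 k s (U : 'M['F_2]_(s, k)) j :
  leq #|[set A : 'M['F_2]_k | [&& (<<A>>%MS == A), (U <= A)%MS &
                                  \rank A == addn (\rank U) j]]| (expn 2 (muln j k)).
Proof.
pose f (B : 'M['F_2]_(j, k)) := <<(U + B)%MS>>%MS.
apply: (@leq_trans #|f @: [set: 'M['F_2]_(j, k)]|); last first.
  by apply: leq_trans (leq_imset_card _ _) _; rewrite cardsT card_mx card_Fp.
apply: subset_leq_card; apply/subsetP => A; rewrite inE => /and3P [/eqP rA sUA /eqP rkA].
have rd : \rank (A :\: U)%MS = j.
  have := mxrank_cap_compl A U; rewrite ((capmx_idPr sUA).1) rkA; lia.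
pose B : 'M['F_2]_(j, k) := castmx (rd, erefl k) (row_base (A :\: U)%MS).
apply/imsetP; exists B; rewrite ?inE //.
rewrite /f -{1}rA; apply: eq_genmx.
have eB : (B :=: A :\: U)%MS.
  apply: eqmx_trans (eq_row_base (A :\: U)%MS); exact: eqmx_cast.
apply: eqmx_sym.
apply: (eqmx_trans (adds_eqmx (eqmx_refl U) eB)).
rewrite addsmxC.
apply: eqmx_trans _ (addsmx_diff_cap_eq A U).
apply: adds_eqmx; first exact: eqmx_refl.
apply: eqmx_sym; exact: capmx_idPr.
Qed.

Lemma RsumE (T : finType) (f : T -> R) : Rsum f = \sum_t f t.
Proof. by []. Qed.

Lemma cardR (T : finType) (a b : pred T) :
  (#|[set x | a x && b x]|%:R : R) = \sum_(x | b x) (a x)%:R.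
Proof.
rewrite -sum1_card natr_sum big_mkcond /= [RHS]big_mkcond /=.
apply: eq_bigr => x _; rewrite inE; case: (a x); case: (b x) => //.
Qed.

Lemma prod_ind (I : finType) (P : pred I) (b : I -> bool) :
  \prod_(i | P i) ((b i)%:R : R) = [forall (i | P i), b i]%:R.
Proof.
case: (boolP [forall (i | P i), b i]) => h.
  by rewrite big1 // => i Pi; move/forall_inP: h => /(_ i Pi) ->.
move/forall_inPn: h => [i Pi /negbTE bi].
by rewrite (bigD1 i) //= bi mul0r.
Qed.

Lemma pow_sum (k n w : nat) (a : 'cV['F_2]_n -> R) :
  (\sum_(x | hwt x^T == w) a x) ^+ k =
  \sum_(M : 'M['F_2]_(k, n) | [forall i, hwt (row i M) == w])
      \prod_i a (row i M)^T.
Proof.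
have -> : (\sum_(x | hwt x^T == w) a x) ^+ k =
   \prod_(i < k) \sum_(x | hwt x^T == w) a x by rewrite prodr_const card_ord.
rewrite (bigA_distr_big (fun x : 'cV['F_2]_n => hwt x^T == w) (fun (i : 'I_k) x => a x)) /=.
pose h (M : 'M['F_2]_(k, n)) : {ffun 'I_k -> 'cV['F_2]_n} := [ffun i => (row i M)^T].
pose h' (f : {ffun 'I_k -> 'cV['F_2]_n}) : 'M['F_2]_(k, n) := \matrix_(i, j) f i j 0.
rewrite (reindex h); last first.
  exists h' => [M _|f _].
    by apply/matrixP => i j; rewrite !mxE ffunE !mxE.
  by apply/ffunP => i; apply/matrixP => j z; rewrite ffunE (ord1 z) !mxE.
apply: eq_big => [M|M _]; last by apply: eq_bigr => i _; rewrite ffunE.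
apply/ffun_onP/forallP => H i; have := H i; rewrite ffunE unfold_in /= trmxK //.
Qed.

Lemma card_setR (T : finType) (b : pred T) :
  (#|[set x | b x]|%:R : R) = \sum_x (b x)%:R.
Proof.
rewrite -sum1_card natr_sum big_mkcond /=.
by apply: eq_bigr => x _; rewrite inE; case: (b x).
Qed.

Lemma eqR_le (x y : R) : x = y -> x <= y.
Proof. by move=> ->. Qed.

Section Main.
Variables m n w k : nat.
Definition p : R := (2%:R ^+ m)^-1.
Definition NN : R := 2%:R ^+ (muln m n).
Definition Ix s (K : 'M['F_2]_(m, n)) (x : 'M['F_2]_(n, s)) : R := (K *m x == 0)%:R.

Lemma p_gt0 : 0 < p.
Proof. by rewrite /p invr_gt0 exprn_gt0 // ltr0n. Qed.

Lemma sumK_ind s (Y : 'M['F_2]_(n, s)) :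
  \sum_(K : 'M['F_2]_(m, n)) ((K *m Y == 0)%:R : R) = 2%:R ^+ (muln m (subn n (\rank Y))).
Proof. by rewrite -card_setR card_ker_F2 natrX. Qed.

Lemma ratio r : leq r n -> 2%:R ^+ (muln m (subn n r)) / NN = p ^+ r.
Proof.
move=> hr; rewrite /NN /p.
have -> : muln m n = addn (muln m (subn n r)) (muln m r).
  by rewrite -mulnDr subnK.
rewrite exprD exprM -exprVn invrM ?unitfE ?expf_neq0 ?pnatr_eq0 //.
rewrite mulrCA divrr ?unitfE ?expf_neq0 ?pnatr_eq0 // mulr1.
by rewrite -exprM exprVn.
Qed.

Lemma row_mul_entry (K : 'M['F_2]_(m, n)) (M : 'M['F_2]_(k, n)) i a :
  (K *m (row i M)^T) a 0 = (K *m M^T) a i.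
Proof. by rewrite !mxE; apply: eq_bigr => j _; rewrite !mxE. Qed.

Lemma indprod K (M : 'M['F_2]_(k, n)) (S : {set 'I_k}) :
  \prod_(i in S) Ix K (row i M)^T = Ix K (Dg _ S *m M)^T.
Proof.
rewrite /Ix prod_ind; congr (_%:R); congr (nat_of_bool _); apply/idP/idP.
  move/forall_inP => H; apply/eqP; apply/matrixP => a i.
  rewrite trmx_mul tr_diag_mx mulmxA mul_mx_diag !mxE.
  case: (boolP (i \in S)) => iS; last by rewrite mulr0.
  move: (H i iS) => /eqP /matrixP /(_ a 0).
  rewrite row_mul_entry !mxE => ->; by rewrite mul0r.
move/eqP => H; apply/forall_inP => i iS; apply/eqP/matrixP => a z; rewrite (ord1 z).
move/matrixP: H => /(_ a i).
rewrite trmx_mul tr_diag_mx mulmxA mul_mx_diag !mxE iS mulr1 => H.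
rewrite -[RHS]H; apply: eq_bigr => j _; by rewrite !mxE.
Qed.

Lemma prod_expand K (M : 'M['F_2]_(k, n)) :
  \prod_(i < k) (Ix K (row i M)^T - p) =
  \sum_(S : {set 'I_k}) (- p) ^+ #|~: S| * Ix K (Dg _ S *m M)^T.
Proof.
rewrite bigA_distr; apply: eq_bigr => S _.
rewrite (bigID (mem S)) /= -indprod mulrC; congr (_ * _).
  rewrite -prodr_const; apply: eq_big => [i|i]; first by rewrite in_setC.
  by move=> /negbTE ->.
by apply: eq_bigr => i ->.
Qed.

Lemma R2E : (2 : R)%R = 2%:R :> R.
Proof. by rewrite IZRposE INRE. Qed.

Lemma hwt0 : hwt (0 : 'rV['F_2]_n) = 0%N.
Proof.
rewrite /hwt; apply/eqP; rewrite cards_eq0; apply/eqP/setP => j.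
by rewrite !inE mxE eqxx.
Qed.

Lemma sumX K : ((Xcount w K)%:R : R) = \sum_(x : 'cV['F_2]_n | hwt x^T == w) Ix K x.
Proof. by rewrite /Xcount cardR. Qed.

Lemma EX_val : leq 1 w -> EX m n w = \sum_(x : 'cV['F_2]_n | hwt x^T == w) p.
Proof.
move=> hw; rewrite /EX RsumE RdivE RpowE R2E.
under eq_bigr do rewrite INRE sumX.
rewrite exchange_big /= mulr_suml; apply: eq_bigr => x hx.
rewrite /Ix sumK_ind ratio ?rank_leq_row //.
rewrite -mxrank_tr rank_rV.
have -> : (x^T != 0) by apply/eqP => h; move/eqP: hx; rewrite h hwt0 => h0; rewrite -h0 in hw.
by rewrite expr1.
Qed.

Definition gM (M : 'M['F_2]_(k, n)) : R :=
  \sum_(S : {set 'I_k}) (- p) ^+ #|~: S| * p ^+ \rank (Dg _ S *m M).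

Lemma CM_val : leq 1 w -> central_moment k m n w =
  \sum_(M : 'M['F_2]_(k, n) | [forall i, hwt (row i M) == w]) gM M.
Proof.
move=> hw; rewrite /central_moment RsumE RdivE RpowE R2E (EX_val hw).
under eq_bigr => K _.
  rewrite RpowE RminusE INRE sumX -sumrB pow_sum.
  under eq_bigr do rewrite prod_expand.
  over.
rewrite /= exchange_big /= mulr_suml; apply: eq_bigr => M hM.
rewrite exchange_big /= mulr_suml /gM; apply: eq_bigr => S _.
rewrite -mulr_sumr -mulrA; congr (_ * _).
rewrite /Ix sumK_ind ratio ?rank_leq_row //.
by rewrite mxrank_tr.
Qed.

Lemma p_le1 : p <= 1.
Proof. by rewrite /p invr_le1 ?exprn_ege1 ?ler1n ?unitfE ?expf_neq0 ?pnatr_eq0 // exprn_gt0 ?ltr0n. Qed.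

Lemma gM_D (M : 'M['F_2]_(k, n)) : gM M =
  \sum_(D : {set 'I_k}) (- p) ^+ #|D| * p ^+ (subn (\rank M) (cc M^T D)).
Proof.
rewrite /gM (reindex_inj (@setC_inj _)) /=; apply: eq_bigr => D _.
rewrite setCK; congr (_ * _ ^+ _).
have := rank_split M (~: D); rewrite setCK => <-; by rewrite addnK.
Qed.

Lemma gM_zero (M : 'M['F_2]_(k, n)) i :
  ((delta_mx 0 i : 'rV['F_2]_k) <= M^T)%MS -> gM M = 0.
Proof.
move=> hi; rewrite gM_D (bigID [pred D : {set 'I_k} | i \in D]) /=.
rewrite (reindex_onto (fun D => i |: D) (fun D => D :\ i)) /=; last first.
  by move=> D hD; rewrite setD1K.
have ec : forall D, ((i \in i |: D) && ((i |: D) :\ i == D)) = (i \notin D).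
  move=> D; rewrite setU11 /=; case: (boolP (i \in D)) => hD.
    apply/negbTE/eqP => e.
    by move: hD; rewrite -e setD11.
  by rewrite setU1K // eqxx.
under eq_bigl do rewrite ec.
rewrite -big_split /=; apply: big1 => D hD.
rewrite cc_step // cardsU1 hD add1n.
have hle := cc_le M^T (i |: D); rewrite cc_step // mxrank_tr in hle.
have e : subn (\rank M) (cc M^T D) = (subn (\rank M) (cc M^T D).+1).+1 by lia.
rewrite e !exprS; ring.
Qed.
Lemma arith1 c d r : leq c.+1 d -> leq c r -> leq r.+1 (addn d (subn r c)).
Proof. lia. Qed.

Lemma card_sets : #|{set 'I_k}| = expn 2 k.
Proof. by rewrite -cardsT -powersetT card_powerset cardsT card_ord. Qed.

Lemma gM_bounds (M : 'M['F_2]_(k, n)) :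
  (forall i, ~~ ((delta_mx 0 i : 'rV['F_2]_k) <= M^T)%MS) ->
  2%:R ^+ k * p <= 2^-1 ->
  p ^+ \rank M / 2%:R <= gM M /\ gM M <= 2%:R * p ^+ \rank M.
Proof.
move=> hr hk; have p0 := p_gt0; have p1 := p_le1.
rewrite gM_D (bigD1 set0) //= cards0 cc0 subn0 expr0 mul1r.
set rest := \sum_(D | D != set0) _.
have hb : `|rest| <= 2%:R ^+ k * p * p ^+ \rank M.
  apply: le_trans (ler_norm_sum _ _ _) _.
  apply: (@le_trans _ _ (\sum_(D : {set 'I_k} | D != set0) p ^+ (\rank M).+1)).
    apply: ler_sum => D hD.
    rewrite normrM !normrX normrN (ger0_norm (ltW p0)) -exprD.
    apply: ler_wiXn2l; rewrite ?(ltW p0) //.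
    have h1 := cc_robust hr hD; have h2 := cc_le M^T D; rewrite mxrank_tr in h2.
    exact: arith1 h1 h2.
  apply: (@le_trans _ _ (\sum_(D : {set 'I_k}) p ^+ (\rank M).+1)).
    rewrite [X in _ <= X](bigD1 set0) //=.
    by rewrite lerDr exprn_ge0 // ltW.
  rewrite sumr_const card_sets.
  have e : p ^+ (\rank M).+1 *+ expn 2 k = 2%:R ^+ k * p * p ^+ \rank M.
    by rewrite -mulr_natr natrX exprS; ring.
  by rewrite e.
have hX : 2%:R ^+ k * p * p ^+ \rank M <= p ^+ \rank M / 2%:R.
  have hpr : 0 <= p ^+ \rank M by rewrite exprn_ge0 // ltW.
  by apply: le_trans (ler_wpM2r hpr hk) _; rewrite mulrC.
move: hb; rewrite ler_norml => /andP [hl hu].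
have hpr : 0 <= p ^+ \rank M by rewrite exprn_ge0 // ltW.
split; lra.
Qed.
Lemma geom (x : R) N : 0 <= x -> x <= 2^-1 -> \sum_(j < N) x ^+ j <= 2%:R.
Proof.
move=> x0 x1.
suff : \sum_(j < N) x ^+ j <= 2%:R - 2%:R * x ^+ N.
  move=> h; apply: le_trans h _; have := exprn_ge0 N x0; lra.
elim: N => [|N IH]; first by rewrite big_ord0 expr0; lra.
rewrite big_ord_recr /= exprS.
have hxN := exprn_ge0 N x0.
have h2 : x * x ^+ N <= 2^-1 * x ^+ N by apply: ler_wpM2r.
lra.
Qed.

Definition hM (M : 'M['F_2]_(k, n)) : R :=
  \sum_(A : 'M['F_2]_k)
     (if [&& is_subspace_rep A, robust A & (M^T <= A)%MS] then p ^+ \rank A else 0).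

Lemma hM_zero (M : 'M['F_2]_(k, n)) i :
  ((delta_mx 0 i : 'rV['F_2]_k) <= M^T)%MS -> hM M = 0.
Proof.
move=> hi; apply: big1 => A _.
case: (boolP (M^T <= A)%MS) => hA; last by rewrite !andbF.
have : sensitive A i by rewrite sensitiveE (submx_trans hi hA).
move=> hs; have -> : robust A = false.
  by apply/negbTE/forallPn; exists i; rewrite hs.
by rewrite andbF.
Qed.

Lemma hM_lower (M : 'M['F_2]_(k, n)) :
  (forall i, ~~ ((delta_mx 0 i : 'rV['F_2]_k) <= M^T)%MS) ->
  p ^+ \rank M <= hM M.
Proof.
move=> hr; rewrite /hM (bigD1 <<M^T>>%MS) //=.
have -> : [&& is_subspace_rep <<M^T>>%MS, robust <<M^T>>%MS & (M^T <= <<M^T>>)%MS].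
  rewrite /is_subspace_rep genmx_id eqxx genmxE submx_refl andbT /=.
  by apply/forallP => i; rewrite sensitiveE genmxE.
rewrite mxrank_gen mxrank_tr lerDl.
apply: sumr_ge0 => A _; case: ifP => // _; apply: exprn_ge0; exact: ltW p_gt0.
Qed.

Lemma split_rank r (A : 'M['F_2]_k) (f : R) (b : bool) :
  (b -> leq r (\rank A)) ->
  (if b then f else 0) =
  \sum_(j < k.+1) (if b && (\rank A == addn r j) then f else 0).
Proof.
case: b => /= hb; last by rewrite big1.
have hj : leq (subn (\rank A) r).+1 k.+1.
  have := rank_leq_row A; lia.
rewrite (bigD1 (Ordinal hj)) //= subnKC ?hb // eqxx big1 ?addr0 //.
move=> j hne; case: eqP => // e; case/negP: hne; apply/eqP/val_inj => /=.
by rewrite e addKn.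
Qed.

Lemma hM_upper (M : 'M['F_2]_(k, n)) :
  2%:R ^+ k * p <= 2^-1 -> hM M <= 2%:R * p ^+ \rank M.
Proof.
move=> hk; have p0 := p_gt0.
set r := \rank M^T.
apply: (@le_trans _ _ (\sum_(A : 'M['F_2]_k)
    (if (is_subspace_rep A && (M^T <= A)%MS) then p ^+ \rank A else 0))).
  apply: ler_sum => A _; case: (is_subspace_rep A); case: (robust A);
  case: (M^T <= A)%MS => //=; apply: exprn_ge0; exact: ltW.
have e : forall A : 'M['F_2]_k,
  (if (is_subspace_rep A && (M^T <= A)%MS) then p ^+ \rank A else 0) =
  \sum_(j < k.+1) (if (is_subspace_rep A && (M^T <= A)%MS) && (\rank A == addn r j)
                   then p ^+ \rank A else 0).
  move=> A; apply: split_rank => /andP [_ h]; exact: mxrankS.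
under eq_bigr do rewrite e.
rewrite exchange_big /=.
apply: (@le_trans _ _ (\sum_(j < k.+1) p ^+ r * (2%:R ^+ k * p) ^+ j)).
  apply: ler_sum => j _.
  apply: (@le_trans _ _ ((expn 2 (muln j k))%:R * p ^+ (addn r j))); last first.
    rewrite natrX mulnC exprM exprMn exprD; apply: eqR_le; ring.
  apply: (@le_trans _ _ (#|[set A : 'M['F_2]_k | [&& (<<A>>%MS == A), (M^T <= A)%MS &
                                  \rank A == addn (\rank M^T) j]]|%:R * p ^+ (addn r j))).
    apply: eqR_le; rewrite card_setR mulr_suml; apply: eq_bigr => A _.
    rewrite /is_subspace_rep -andbA.
    case: (<<A>>%MS == A); case: (M^T <= A)%MS; case: eqP => //= er;
      by rewrite ?mul1r ?mul0r ?er.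
  apply: ler_wpM2r; first by apply: exprn_ge0; exact: ltW.
  by rewrite ler_nat card_super_F2.
rewrite -mulr_sumr mulrC -mxrank_tr -/r; apply: ler_wpM2r.
  by apply: exprn_ge0; exact: ltW.
apply: geom => //; apply: mulr_ge0; [apply: exprn_ge0|exact: ltW] => //.
Qed.
Lemma sum_if (I : finType) (P : pred I) (F : I -> R) (b : bool) :
  (if b then \sum_(i | P i) F i else 0) = \sum_(i | P i) (if b then F i else 0).
Proof. by case: b => //; rewrite big1. Qed.

Lemma cardT (A : 'M['F_2]_k) :
  (#|T_set n w A|%:R : R) =
  \sum_(M : 'M['F_2]_(k, n) | [forall i, hwt (row i M) == w]) ((M^T <= A)%MS)%:R.
Proof.
rewrite /T_set -sum1_card natr_sum big_mkcond /= [RHS]big_mkcond /=.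
apply: eq_bigr => M _; rewrite inE.
have -> : [forall j, ((col j M)^T <= A)%MS] = (M^T <= A)%MS.
  apply/forallP/row_subP => H j; have := H j; by rewrite tr_col.
by case: [forall i, hwt (row i M) == w]; case: (M^T <= A)%MS.
Qed.

Lemma pow2inv r : ((2 : R) ^ (m * r))%R^-1 = p ^+ r.
Proof. by rewrite RpowE R2E /p exprM exprVn. Qed.

Lemma RS_val : robust_sum k m n w =
  \sum_(M : 'M['F_2]_(k, n) | [forall i, hwt (row i M) == w]) hM M.
Proof.
rewrite /robust_sum RsumE.
under eq_bigr => A _.
  rewrite RdivE INRE pow2inv cardT mulr_suml sum_if.
  over.
rewrite /= /hM exchange_big /=; apply: eq_bigr => M _.
apply: eq_bigr => A _.
rewrite andbA; case: (is_subspace_rep A && robust A) => //=.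
by case: (M^T <= A)%MS; rewrite /= ?mul1r ?mul0r.
Qed.
End Main.


Lemma core m n w k : leq 1 w -> 2%:R ^+ k * p m <= 2^-1 ->
  robust_sum k m n w / 4%:R <= central_moment k m n w /\
  central_moment k m n w <= 2%:R * robust_sum k m n w.
Proof.
move=> hw hk; rewrite (CM_val m n k hw) RS_val mulr_suml mulr_sumr; split.
  apply: ler_sum => M _.
  case: (boolP [forall i, ~~ ((delta_mx 0 i : 'rV['F_2]_k) <= M^T)%MS]).
    move/forallP => hr.
    have [g1 g2] := gM_bounds hr hk.
    have h1 := hM_upper M hk; lra.
  move/forallPn => [i]; rewrite negbK => hi.
  by rewrite (gM_zero m hi) (hM_zero m hi) mul0r.
apply: ler_sum => M _.
case: (boolP [forall i, ~~ ((delta_mx 0 i : 'rV['F_2]_k) <= M^T)%MS]).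
  move/forallP => hr.
  have [g1 g2] := gM_bounds hr hk.
  have h1 := hM_lower m hr; lra.
move/forallPn => [i]; rewrite negbK => hi.
by rewrite (gM_zero m hi) (hM_zero m hi) mulr0.
Qed.

Lemma pk_bound m k : leq k.+1 m -> 2%:R ^+ k * p m <= 2^-1.
Proof.
move=> h; rewrite /p.
have h2 : (2%:R : R) ^+ k.+1 <= 2%:R ^+ m by apply: ler_weXn2l; rewrite ?ler1n.
have hpos : (0 : R) < 2%:R ^+ m by rewrite exprn_gt0 ?ltr0n.
rewrite -[_ * _^-1]/(_ / _) ler_pdivrMr // exprS in h2 *.
have h0 : (0 : R) <= 2%:R ^+ k by rewrite exprn_ge0 ?ler0n.
lra.
Qed.

Unset Implicit Arguments.
Set Strict Implicit.
Local Close Scope ring_scope.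
From Stdlib Require Import Lra.
Local Open Scope R_scope.

Theorem mainTheorem4 (gamma lambda : R) (k : nat -> nat) :
  is_rational gamma -> is_rational lambda ->
  0 < gamma < 1 / 2 ->
  0 < lambda < hbin gamma ->
  (forall n m w, admissible gamma lambda n m w -> (2 <= k n)%nat) ->
  (* k(n) = o(n / log n) along admissible n *)
  (forall eps, 0 < eps -> exists n0 : nat, forall n m w,
      admissible gamma lambda n m w -> (n0 <= n)%nat ->
      INR (k n) <= eps * (INR n / log2 (INR n))) ->
  (* E[(X - EX)^k] = Theta(sum over robust V of |T_V| N^{-lambda dim V}) *)
  exists (c1 c2 : R) (n0 : nat), 0 < c1 /\ 0 < c2 /\
    forall n m w, admissible gamma lambda n m w -> (n0 <= n)%nat ->
      c1 * robust_sum (k n) m n w <= central_moment (k n) m n w /\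
      central_moment (k n) m n w <= c2 * robust_sum (k n) m n w.
Proof.
intros Hq1 Hq2 Hg Hl Hk2 Ho.
destruct (@stdlib_side gamma lambda k (proj1 Hg) (proj1 Hl) Ho) as [n0 Hn0].
exists (/ 4), 2, n0.
split; [apply Rinv_0_lt_compat; apply IZR_lt; reflexivity|split; [exact Rlt_0_2|]].
intros n m w Had Hn. destruct (Hn0 n m w Had Hn) as [Hw Hkm].
have [c1 c2] := core n Hw (pk_bound Hkm).
split; apply/RleP.
  rewrite RmultE RinvE IZRposE INRE GRing.mulrC; exact: c1.
rewrite RmultE R2E; exact: c2.
Qed.
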